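(* Let $(\gamma_j)_{j\ge1}$ be a sequence with $1\ge\gamma_1\ge\gamma_2\ge\cdots\ge0$ and product weights $\gamma_{\mathfrak u}=\prod_{j\in\mathfrak u}\gamma_j$, and assume there is $c>0$ with $\gamma_j\ge c$ for all $j\in\mathbb N$. Then for all $\varepsilon\in(0,1)$ and all $d\in\mathbb N$, $N_{\boldsymbol\gamma}(\varepsilon,d)\ge\left(\frac{c}{4\varepsilon}\right)^d$. In particular, the $\boldsymbol\gamma$-weighted star discrepancy of the centered regular grid suffers from the curse of dimensionality (and this holds in particular for the classical star discrepancy, i.e. $\gamma_j=1$ for all $j$).
   Context: Write $[d]=\{1,\dots,d\}$. For $m_1,\dots,m_d\in\mathbb N$ the centered regular grid is $\Gamma_{m_1,\dots,m_d}=\{(\frac{2\ell_1+1}{2m_1},\dots,\frac{2\ell_d+1}{2m_d}) : \ell_j\in\{0,\dots,m_j-1\}\}$, with $N=m_1\cdots m_d$ points. For an $N$-point set $\mathcal P_d\subset[0,1)^d$ with real coefficients $\mathcal A(\mathcal P_d)=\{a_{\boldsymbol x}\}$, the local discrepancy is $\Delta_{\mathcal P_d,\mathcal A(\mathcal P_d)}(\boldsymbol\alpha)=\sum_{\boldsymbol x\in\mathcal P_d}a_{\boldsymbol x}\mathbf 1_{[\boldsymbol 0,\boldsymbol\alpha)}(\boldsymbol x)-\prod_{j=1}^d\alpha_j$, $\boldsymbol\alpha\in[0,1]^d$, and the $\boldsymbol\gamma$-weighted star discrepancy is $D^*_{N,\boldsymbol\gamma}(\mathcal P_d,\mathcal A(\mathcal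 P_d))=\sup_{\boldsymbol\alpha\in[0,1]^d}\max_{\emptyset\ne\mathfrak u\subseteq[d]}\gamma_{\mathfrak u}|\Delta_{\mathcal P_d,\mathcal A(\mathcal P_d)}((\boldsymbol\alpha_{\mathfrak u},\boldsymbol 1))|$, where $(\boldsymbol\alpha_{\mathfrak u},\boldsymbol 1)$ has $j$-th coordinate $\alpha_j$ for $j\in\mathfrak u$ and $1$ otherwise. For $\varepsilon\in(0,1)$, $d\in\mathbb N$, $N_{\boldsymbol\gamma}(\varepsilon,d)=\min\{N: N=m_1\cdots m_d \text{ and there exist coefficients } \mathcal A(\Gamma_{m_1,\dots,m_d}) \text{ with } D^*_{N,\boldsymbol\gamma}(\Gamma_{m_1,\dots,m_d},\mathcal A(\Gamma_{m_1,\dots,m_d}))\le\varepsilon\}$. The discrepancy suffers from the curse of dimensionality if there exist $C,\varepsilon_0,\tau>0$ with $N_{\boldsymbol\gamma}(\varepsilon,d)\ge C(1+\tau)^d$ for all $\varepsilon\le\varepsilon_0$ and infinitely many $d\in\mathbb N$. *)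

(* Defs.v *)
From HB Require Import structures.
From mathcomp Require Import all_boot all_order all_algebra.
From mathcomp Require Import all_classical all_reals.
Set Implicit Arguments. Unset Strict Implicit. Unset Printing Implicit Defensive.
Import Order.TTheory GRing.Theory Num.Theory.
Local Open Scope ring_scope.
Local Open Scope classical_set_scope.

Section Defs.
Variable R : realType.

Definition grid_index (d : nat) (m : 'I_d -> nat) : finType :=
  {dffun forall j : 'I_d, 'I_(m j)}.

Definition grid_pt (d : nat) (m : 'I_d -> nat) (l : grid_index m) : 'I_d -> R :=
  fun j => ((2 * (l j : nat) + 1)%:R) / ((2 * m j)%:R).

Definition local_disc (d : nat) (m : 'I_d -> nat) (a : ('I_d -> R) -> R)
    (alpha : 'I_d -> R) : R :=
  \sum_(l : grid_index m)
     a (grid_pt l) * (if [forall j, (0 <= grid_pt l j) && (grid_pt l j < alpha j)]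
                      then 1 else 0)
  - \prod_(j < d) alpha j.

(* product weights gamma_u = prod_{j in u} gamma_j ; coordinate j : 'I_d is the (j+1)-th *)
Definition prod_weight (gamma : nat -> R) (d : nat) (u : {set 'I_d}) : R :=
  \prod_(j in u) gamma j.+1.

Definition alpha_u1 (d : nat) (u : {set 'I_d}) (alpha : 'I_d -> R) : 'I_d -> R :=
  fun j => if j \in u then alpha j else 1.

Definition wstar_disc (gamma : nat -> R) (d : nat) (m : 'I_d -> nat)
    (a : ('I_d -> R) -> R) : R :=
  sup [set r | exists alpha : 'I_d -> R, exists u : {set 'I_d},
        (forall j, 0 <= alpha j <= 1) /\ (u != finset.set0 :> {set 'I_d}) /\
        r = prod_weight gamma u * `|local_disc m a (alpha_u1 u alpha)|].

Definition feasibleN (gamma : nat -> R) (eps : R) (d N : nat) : Prop :=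
  exists m : 'I_d -> nat, (forall j, (0 < m j)%N) /\ N = (\prod_(j < d) m j)%N /\
    exists a : ('I_d -> R) -> R, wstar_disc gamma m a <= eps.

(* "N_gamma(eps,d) >= b": every admissible N is >= b, i.e. the minimum is >= b *)
Definition Ngamma_ge (gamma : nat -> R) (eps : R) (d : nat) (b : R) : Prop :=
  forall N, feasibleN gamma eps d N -> b <= N%:R.

Definition curse_of_dim (gamma : nat -> R) : Prop :=
  exists C eps0 tau : R, 0 < C /\ 0 < eps0 /\ 0 < tau /\
    forall eps, 0 < eps -> eps < 1 -> eps <= eps0 ->
      forall d0 : nat, exists d : nat, (d0 <= d)%N /\ (0 < d)%N /\
        Ngamma_ge gamma eps d (C * (1 + tau) ^+ d).

End Defs.

(* Main.v *)
Require Import Defs.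
From HB Require Import structures.
From mathcomp Require Import all_boot all_order all_algebra.
From mathcomp Require Import all_classical all_reals.
From mathcomp Require Import zify.
Import Order.TTheory GRing.Theory Num.Theory.
Local Open Scope ring_scope.
Section S.
Variable R : realType.
Local Open Scope classical_set_scope.

Lemma gamma_le1 (gamma : nat -> R) :
  gamma 1%N <= 1 ->
  (forall j : nat, (1 <= j)%N -> gamma j.+1 <= gamma j) ->
  forall j, gamma j.+1 <= 1.
Proof.
move=> g1 gd; elim=> [//|j IH]; exact: le_trans (gd _ _) IH.
Qed.

Lemma ubounded (gamma : nat -> R) d (m : 'I_d -> nat) a :
  gamma 1%N <= 1 ->
  (forall j : nat, (1 <= j)%N -> gamma j.+1 <= gamma j) ->
  (forall j : nat, (1 <= j)%N -> 0 <= gamma j) ->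
  has_ubound [set r | exists alpha : 'I_d -> R, exists u : {set 'I_d},
        (forall j, 0 <= alpha j <= 1) /\ (u != finset.set0 :> {set 'I_d}) /\
        r = prod_weight gamma u * `|local_disc m a (alpha_u1 u alpha)|].
Proof.
move=> g1 gd g0.
exists (\sum_(l : grid_index m) `|a (grid_pt R l)| + 1).
move=> r [alpha [u [Ha [_ ->]]]].
have w0 : 0 <= prod_weight gamma u by apply: prodr_ge0 => j _; exact: g0.
have w1 : prod_weight gamma u <= 1.
  apply: prodr_ile1 => j _; rewrite g0 //=; exact: gamma_le1.
have al : forall j, 0 <= alpha_u1 u alpha j <= 1.
  by move=> j; rewrite /alpha_u1; case: (j \in u) => //; rewrite ler01 lexx.
have HD : `|local_disc m a (alpha_u1 u alpha)| <= \sum_(l : grid_index m) `|a (grid_pt R l)| + 1.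
  rewrite /local_disc; apply: le_trans (ler_normB _ _) _; apply: lerD.
    apply: le_trans (ler_norm_sum _ _ _) _; apply: ler_sum => l _.
    rewrite normrM; case: ifP => _; rewrite ?normr1 ?normr0 ?mulr1 ?mulr0 //.
  rewrite ger0_norm; last by apply: prodr_ge0 => j _; case/andP: (al j).
  by apply: prodr_ile1 => j _; exact: al.
apply: le_trans (ler_wpM2r (normr_ge0 _) w1) _; rewrite mul1r //.
Qed.

Lemma coord_bound (gamma : nat -> R) d (m : 'I_d -> nat) a (eps c : R) :
  gamma 1%N <= 1 ->
  (forall j : nat, (1 <= j)%N -> gamma j.+1 <= gamma j) ->
  (forall j : nat, (1 <= j)%N -> 0 <= gamma j) ->
  (forall j : nat, (1 <= j)%N -> c <= gamma j) ->
  (forall j, (0 < m j)%N) -> wstar_disc gamma m a <= eps ->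
  forall j, c / (2 * (m j)%:R) <= eps.
Proof.
move=> g1 gd g0 gc mpos He j.
apply: le_trans He.
have mj : 0 < (2 * m j)%:R :> R by rewrite ltr0n muln_gt0 mpos.
pose al := fun _ : 'I_d => ((2 * m j)%:R : R)^-1.
apply: (@le_trans _ _ (prod_weight gamma [set j]%SET * `|local_disc m a (alpha_u1 [set j]%SET al)|)); last first.
  have := ub_le_sup (@ubounded gamma d m a g1 gd g0); apply.
  rewrite /=.
  exists al, [set j]%SET; split.
    move=> k; rewrite /al invr_ge0 ltW //= invf_le1 //.
    by rewrite ler1n muln_gt0 mpos.
  split; first by apply/set0Pn; exists j; rewrite finset.in_set1.
  reflexivity.
rewrite /prod_weight big_set1.
have -> : local_disc m a (alpha_u1 [set j]%SET al) = - ((2 * m j)%:R)^-1.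
  rewrite /local_disc big1; last first.
    move=> l _; case: ifP; rewrite ?mulr0 //.
    move/forallP/(_ j)/andP=> [_]; rewrite /alpha_u1 finset.in_set1 eqxx /grid_pt.
    rewrite ltr_pdivrMr // mulVf ?gt_eqF // => H.
    rewrite natrD in H; have : 1 <= (2 * l j)%:R + 1 :> R by rewrite lerDr.
    by rewrite leNgt H.
  rewrite sub0r (bigD1 j) //= /alpha_u1 finset.in_set1 eqxx big1 ?mulr1 // => k.
  by rewrite finset.in_set1 => /negbTE ->.
rewrite normrN ger0_norm; last by rewrite invr_ge0 ltW.
rewrite -natrM ler_wpM2r ?invr_ge0 ?(ltW mj) //; exact: gc.
Qed.
End S.

From mathcomp Require Import lra.

Theorem lemma2 (R : realType) (gamma : nat -> R) (c : R) :
  gamma 1%N <= 1 ->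
  (forall j : nat, (1 <= j)%N -> gamma j.+1 <= gamma j) ->
  (forall j : nat, (1 <= j)%N -> 0 <= gamma j) ->
  0 < c ->
  (forall j : nat, (1 <= j)%N -> c <= gamma j) ->
  (forall (eps : R) (d : nat), 0 < eps -> eps < 1 -> (0 < d)%N ->
     Ngamma_ge gamma eps d ((c / (4 * eps)) ^+ d))
  /\ curse_of_dim gamma.
Proof.
move=> g1 gd g0 c0 gc.
have P1 : forall (eps : R) (d : nat), 0 < eps -> eps < 1 -> (0 < d)%N ->
     Ngamma_ge gamma eps d ((c / (4 * eps)) ^+ d).
  move=> eps d e0 e1 dpos N [m [mpos [-> [a Ha]]]].
  have HB := @coord_bound R gamma d m a eps c g1 gd g0 gc mpos Ha.
  rewrite natr_prod -[d in _ ^+ d]card_ord -prodr_const.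
  apply: ler_prod => j _; apply/andP; split.
    by rewrite divr_ge0 ?ltW // mulr_gt0.
  have := HB j; have : 0 < (m j)%:R :> R by rewrite ltr0n.
  set M := (m j)%:R => M0.
  rewrite ler_pdivrMr ?mulr_gt0 // => H.
  rewrite ler_pdivrMr ?mulr_gt0 //; nra.
split => //.
exists 1, (c / 8), 1; split; first lra.
split; first by rewrite divr_gt0.
split; first lra.
move=> eps e0 e1 e8 d0; exists d0.+1; split => //; split => //.
move=> N HN; apply: le_trans (P1 eps d0.+1 e0 e1 isT N HN).
rewrite mul1r; apply: lerXn2r.
- by rewrite nnegrE; lra.
- by rewrite nnegrE divr_ge0 // ltW // mulr_gt0.
rewrite ler_pdivlMr ?mulr_gt0 //.

move: e8; rewrite ler_pdivlMr //; lra.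
Qed.
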